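(* Let $n,d\in\mathbb{N}$ with $1\le d$ and $d+1\le n$, and let $\mathbf{X}=\{\mathbf{x}_1,\dots,\mathbf{x}_m\}\subseteq\mathbb{B}^n\setminus\{\mathbf{0}\}$ be any dataset of nonzero boolean vectors. Let $\tilde{\mathbf{K}}^{(d)}$ and $\tilde{\mathbf{K}}^{(d+1)}$ be the $m\times m$ matrices with entries $\tilde\kappa_\vee^d(\mathbf{x}_i,\mathbf{x}_j)$ and $\tilde\kappa_\vee^{d+1}(\mathbf{x}_i,\mathbf{x}_j)$. Then $\tilde\kappa_\vee^d(\mathbf{x}_i,\mathbf{x}_j)^2\le\tilde\kappa_\vee^{d+1}(\mathbf{x}_i,\mathbf{x}_j)^2$ for all $i,j$, and consequently $\mathcal{C}(\tilde{\mathbf{K}}^{(d)})\ge\mathcal{C}(\tilde{\mathbf{K}}^{(d+1)})$. In other words, $\tilde\kappa_\vee^{d+1}$ is more general than $\tilde\kappa_\vee^d$.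
   Context: $\mathbb{B}=\{0,1\}$. $H:\mathbb{R}\to\mathbb{B}$ is the Heaviside function, $H(t)=1$ if $t>0$ and $0$ otherwise. Let $\mathbb{B}_d=\{\mathbf{b}\in\mathbb{B}^n:\|\mathbf{b}\|_1=d\}$. The Disjunctive kernel (D-Kernel) of arity $d$ is $\kappa_\vee^d(\mathbf{x},\mathbf{z})=\langle\phi_\vee^d(\mathbf{x}),\phi_\vee^d(\mathbf{z})\rangle$ where $\phi_\vee^d(\mathbf{x})=(H(\langle\mathbf{x},\mathbf{b}\rangle))_{\mathbf{b}\in\mathbb{B}_d}$ (each feature is the disjunction of the $d$ variables selected by $\mathbf{b}$). Equivalently, writing $|\mathbf{x}|=\langle\mathbf{x},\mathbf{x}\rangle$ for the number of ones, $\kappa_\vee^d(\mathbf{x},\mathbf{z})=\binom{n}{d}-\binom{n-|\mathbf{x}|}{d}-\binom{n-|\mathbf{z}|}{d}+\binom{n-|\mathbf{x}|-|\mathbf{z}|+\langle\mathbf{x},\mathbf{z}\rangle}{d}$. For a kernel $\kappa$, its normalized version is $\tilde\kappa(\mathbf{x},\mathbf{z})=\kappa(\mathbf{x},\mathbf{z})/\sqrt{\kappa(\mathbf{x},\mathbf{x})\kappa(\mathbf{z},\mathbf{z})}$. The spectral ratio of a positive semidefinite matrix $\mathbf{K}\in\mathbb{R}^{m\times m}$ is $\mathcal{C}(\mathbf{K})=\sum_i\mathbf{K}_{ii}/\sqrt{\sum_{i,j}\mathbf{K}_{ij}^2}$. A kernel $\kappa_1$ is said to be more general than $\kappa_2$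 if $\mathcal{C}(\mathbf{K}^{(1)}_{\mathbf{X}})\le\mathcal{C}(\mathbf{K}^{(2)}_{\mathbf{X}})$ for the kernel matrices on the datasets under consideration. *)

(* Defs.v *)
From HB Require Import structures.
From mathcomp Require Import all_boot all_order all_algebra.
Set Implicit Arguments. Unset Strict Implicit. Unset Printing Implicit Defensive.
Import Order.TTheory GRing.Theory Num.Theory.
Local Open Scope ring_scope.

Notation bvec n := {ffun 'I_n -> bool}.

Definition heaviside (R : realDomainType) (t : R) : R := if 0 < t then 1 else 0.

Definition binner (R : realDomainType) n (x z : bvec n) : R :=
  \sum_(i < n) (x i)%:R * (z i)%:R.

Definition Bd n d : {set bvec n} := [set b : bvec n | (\sum_(i < n) (b i : nat) == d)%N].

(* Disjunctive kernel: <phi_d(x), phi_d(z)>, phi_d(x) = (H(<x,b>))_{b in B_d}. *)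
Definition Dkernel (R : realDomainType) n d (x z : bvec n) : R :=
  \sum_(b in Bd n d) heaviside (binner R x b) * heaviside (binner R z b).

Definition normalize (R : rcfType) n (k : bvec n -> bvec n -> R) (x z : bvec n) : R :=
  k x z / Num.sqrt (k x x * k z z).

Definition nDkernel (R : rcfType) n d (x z : bvec n) : R :=
  normalize (@Dkernel R n d) x z.

Definition nDmatrix (R : rcfType) n d m (X : 'I_m -> bvec n) : 'M[R]_m :=
  \matrix_(i < m, j < m) nDkernel R d (X i) (X j).

Definition spectral_ratio (R : rcfType) m (K : 'M[R]_m) : R :=
  \tr K / Num.sqrt (\sum_(i < m) \sum_(j < m) K i j ^+ 2).

(* Main.v *)
Require Import Defs.
From HB Require Import structures.
From mathcomp Require Import all_boot all_order all_algebra.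
Import Order.TTheory GRing.Theory Num.Theory.
Local Open Scope ring_scope.
From mathcomp Require Import lra zify.
Set Implicit Arguments. Unset Strict Implicit. Unset Printing Implicit Defensive.
Local Close Scope ring_scope.
Lemma pascal_sum e q p : q <= p ->
  'C(p, e.+1) = 'C(q, e.+1) + \sum_(q <= k < p) 'C(k, e).
Proof.
elim: p => [|p IH]; first by rewrite leqn0 => /eqP ->; rewrite big_geq.
rewrite leq_eqVlt => /orP [/eqP -> | lt]; first by rewrite big_geq ?addn0.
by rewrite big_nat_recr //= binS IH // addnA.
Qed.

Lemma bin_pt e k k' : k <= k' -> 'C(k, e.+1) * 'C(k', e) <= 'C(k, e) * 'C(k', e.+1).
Proof.
move=> kk.
rewrite -(leq_pmul2l (ltn0Sn e)) mulnA mul_bin_left mulnCA mul_bin_left.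
rewrite mulnCA mulnA [_ * 'C(k', e)]mulnC mulnA -!mulnA.
have h : k - e <= k' - e by apply: leq_sub2r.
move: h; set A := 'C(k, e); set B := 'C(k', e); set u := k - e; set v := k' - e => h.
by rewrite mulnCA [A * B]mulnC mulnA -mulnA leq_mul2r h orbT.
Qed.

Lemma count_split (X : finType) (P Q : pred X) :
  #|[set x | P x]| = #|[set x | P x && Q x]| + #|[set x | P x && ~~ Q x]|.
Proof.
rewrite -(cardsID [set x | Q x] [set x | P x]); congr (_ + _); by apply: eq_card => x; rewrite !inE; case: (P x); case: (Q x).
Qed.



Lemma below e a b c d : b <= c ->
  (\sum_(a <= i < b) 'C(i, e.+1)) * (\sum_(c <= j < d) 'C(j, e)) <=
  (\sum_(a <= i < b) 'C(i, e)) * (\sum_(c <= j < d) 'C(j, e.+1)).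
Proof.
move=> bc; rewrite !big_distrl /= big_seq_cond [X in _ <= X]big_seq_cond.
apply: leq_sum => i; rewrite andbT mem_index_iota => /andP [_ ib].
rewrite !big_distrr /= big_seq_cond [X in _ <= X]big_seq_cond.
apply: leq_sum => j; rewrite andbT mem_index_iota => /andP [cj _].
apply: bin_pt; apply: leq_trans (ltnW ib) (leq_trans bc cj).
Qed.

Lemma sum_ineq e q p M N : q <= M -> p <= N -> q <= p -> M <= N ->
  (\sum_(q <= i < p) 'C(i, e.+1)) * (\sum_(M <= j < N) 'C(j, e)) <=
  (\sum_(q <= i < p) 'C(i, e)) * (\sum_(M <= j < N) 'C(j, e.+1)).
Proof.
move=> qM pN qp MN.
have [pM|Mp] := leqP p M; first exact: below.
rewrite !(big_cat_nat (n:=M) qM (ltnW Mp)) !(big_cat_nat (n:=p) (ltnW Mp) pN) /=.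
have h1 := @below e q M M p (leqnn M).
have h2 := @below e q M p N (ltnW Mp).
have h3 := @below e M p p N (leqnn p).
move: h1 h2 h3.
set G1 := \sum_(q <= i < M) 'C(i, e.+1).
set F1 := \sum_(q <= i < M) 'C(i, e).
set Gc := \sum_(M <= i < p) 'C(i, e.+1).
set Fc := \sum_(M <= i < p) 'C(i, e).
set G2 := \sum_(p <= i < N) 'C(i, e.+1).
set F2 := \sum_(p <= i < N) 'C(i, e).
move=> h1 h2 h3. nia.
Qed.

Definition meets n (S B : {set 'I_n}) := ~~ (B \subset ~: S).
Definition Kc n d (S U : {set 'I_n}) :=
  #|[set B : {set 'I_n} | [&& #|B| == d, meets S B & meets U B]]|.

Lemma miss_count n d (S : {set 'I_n}) :
  #|[set B : {set 'I_n} | (B \subset ~: S) && (#|B| == d)]| = 'C(n - #|S|, d).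
Proof.
rewrite cards_draws; congr 'C(_, _).
have := cardsC S; rewrite card_ord; lia.
Qed.

Lemma alpha_eq n d (S : {set 'I_n}) : Kc d S S + 'C(n - #|S|, d) = 'C(n, d).
Proof.
have := card_draws ('I_n) d; rewrite card_ord => <-.
rewrite (count_split _ (fun B : {set 'I_n} => B \subset ~: S)) addnC.
congr (_ + _).
- by rewrite -miss_count; apply: eq_card => B; rewrite !inE andbC.
- by apply: eq_card => B; rewrite !inE /meets andbb.
Qed.

Definition Dc n d (S U : {set 'I_n}) :=
  #|[set B : {set 'I_n} | [&& #|B| == d, meets S B & ~~ meets U B]]|.

Lemma gamma_eq n d (S U : {set 'I_n}) : Kc d S S = Kc d S U + Dc d S U.
Proof.
rewrite /Kc /Dc (count_split _ (fun B : {set 'I_n} => meets U B)).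
congr (_ + _); apply: eq_card => B; rewrite !inE.
- by case: (#|B| == d); case: (meets S B); case: (meets U B).
- by case: (#|B| == d); case: (meets S B); case: (meets U B).
Qed.

Lemma delta_eq n d (S U : {set 'I_n}) :
  Dc d S U + 'C(n - #|S :|: U|, d) = 'C(n - #|U|, d).
Proof.
rewrite -!miss_count [RHS](count_split _ (fun B : {set 'I_n} => B \subset ~: S)) addnC.
congr (_ + _); apply: eq_card => B; rewrite !inE /meets ?negbK.
- rewrite setCU subsetI.
  by case: (#|B| == d); case: (B \subset ~: S); case: (B \subset ~: U).
- by case: (#|B| == d); case: (B \subset ~: S); case: (B \subset ~: U).
Qed.

Lemma alpha_sum n e (S : {set 'I_n}) :
  Kc e.+1 S S = \sum_(n - #|S| <= k < n) 'C(k, e).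
Proof.
have := alpha_eq e.+1 S; rewrite (pascal_sum e (leq_subr #|S| n)); lia.
Qed.

Lemma delta_sum n e (S U : {set 'I_n}) :
  Dc e.+1 S U = \sum_(n - #|S :|: U| <= k < n - #|U|) 'C(k, e).
Proof.
have h : n - #|S :|: U| <= n - #|U| by apply: leq_sub2l; apply: subset_leq_card; apply: subsetUr.
have := delta_eq e.+1 S U; rewrite (pascal_sum e h); lia.
Qed.

Lemma key n e (S U : {set 'I_n}) :
  Kc e.+1 S U * Kc e.+2 S S <= Kc e.+2 S U * Kc e.+1 S S.
Proof.
have g1 := gamma_eq e.+1 S U; have g2 := gamma_eq e.+2 S U.
have h : Dc e.+2 S U * Kc e.+1 S S <= Dc e.+1 S U * Kc e.+2 S S.
  rewrite !delta_sum !alpha_sum; apply: sum_ineq.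
  - by apply: leq_sub2l; apply: subset_leq_card; apply: subsetUl.
  - exact: leq_subr.
  - by apply: leq_sub2l; apply: subset_leq_card; apply: subsetUr.
  - exact: leq_subr.
move: h g1 g2.
set A1 := Kc e.+1 S S; set A2 := Kc e.+2 S S; set G1 := Kc e.+1 S U; set G2 := Kc e.+2 S U.
set D1 := Dc e.+1 S U; set D2 := Dc e.+2 S U => h g1 g2.
nia.
Qed.

Lemma alpha_pos n e (S : {set 'I_n}) : S != set0 -> e < n -> 0 < Kc e.+1 S S.
Proof.
move=> S0 en; rewrite alpha_sum.
have a0 : 0 < #|S| by rewrite card_gt0.
have : n - #|S| < n by lia.
move: en; move: (n - #|S|) => M; case: n {S S0 a0} => // N en MN.
rewrite big_nat_recr /=; last by lia.
by rewrite addn_gt0 bin_gt0 -ltnS; apply/orP; right.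
Qed.
Local Open Scope ring_scope.
Definition hset n (B : {set 'I_n}) : bvec n := [ffun i => i \in B].
Definition supp n (x : bvec n) : {set 'I_n} := [set i | x i].

Lemma hset_bij n : bijective (@hset n).
Proof.
exists (@supp n) => [B|b]; rewrite /hset /supp.
- by apply/setP => i; rewrite inE ffunE.
- by apply/ffunP => i; rewrite ffunE inE.
Qed.

Lemma hset_Bd n d (B : {set 'I_n}) : (hset B \in Bd n d) = (#|B| == d).
Proof.
rewrite inE; congr (_ == _); rewrite -sum1_card [RHS]big_mkcond /=.
by apply: eq_bigr => i _; rewrite ffunE; case: (i \in B).
Qed.

Lemma heav_hset (R : realDomainType) n (x : bvec n) (B : {set 'I_n}) :
  heaviside (binner R x (hset B)) = (meets (supp x) B)%:R.
Proof.
rewrite /heaviside /binner.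
have -> : (\sum_(i < n) (x i)%:R * (hset B i)%:R : R) = ((\sum_(i < n) ((x i && (i \in B)) : nat))%:R).
  by rewrite natr_sum; apply: eq_bigr => i _; rewrite ffunE -natrM; case: (x i); case: (i \in B).
rewrite ltr0n lt0n sum_nat_eq0.
have E : [forall i, ((x i && (i \in B)) : nat) == 0] = (B \subset ~: supp x).
  apply/forallP/subsetP => H i.
  - move=> iB; move: (H i); rewrite !inE iB andbT; by case: (x i).
  - case iB: (i \in B); last by rewrite andbF.
    by move: (H i iB); rewrite !inE => /negbTE ->.
by rewrite E /meets; case: (B \subset ~: supp x).
Qed.

Lemma Dkernel_Kc (R : realDomainType) n d (x z : bvec n) :
  Dkernel R d x z = (Kc d (supp x) (supp z))%:R.
Proof.
rewrite /Dkernel (reindex (@hset n)); last by apply: onW_bij; apply: hset_bij.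
rewrite /Kc -sum1_card natr_sum big_mkcond [RHS]big_mkcond /=; apply: eq_bigr => B _.
rewrite (hset_Bd d B) !heav_hset inE.
by case: (#|B| == d); case: (meets (supp x) B); case: (meets (supp z) B); rewrite ?mulr1 ?mulr0.
Qed.
Lemma Kc_sym n d (S U : {set 'I_n}) : Kc d S U = Kc d U S.
Proof. by apply: eq_card => B; rewrite !inE; case: (#|B| == d%N); case: (meets S B); case: (meets U B). Qed.

Lemma nk_sq (R : rcfType) n d (x z : bvec n) :
  0 < Dkernel R d x x -> 0 < Dkernel R d z z ->
  nDkernel R d x z ^+ 2 = Dkernel R d x z ^+ 2 / (Dkernel R d x x * Dkernel R d z z).
Proof.
move=> hx hz; rewrite /nDkernel /normalize expr_div_n sqr_sqrtr //.
by rewrite mulr_ge0 // ltW.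
Qed.

Lemma nk_diag (R : rcfType) n d (x : bvec n) :
  0 < Dkernel R d x x -> nDkernel R d x x = 1.
Proof.
move=> hx; rewrite /nDkernel /normalize -expr2 sqrtr_sqr gtr0_norm // divff //.
by rewrite gt_eqF.
Qed.

Lemma supp_ne0 n (x : bvec n) : [exists k, x k] -> supp x != set0.
Proof.
move=> /existsP [k xk]; apply/set0Pn; exists k; by rewrite inE.
Qed.

Lemma pt_ineq (R : rcfType) n e (x z : bvec n) : (e.+2 <= n)%N ->
  supp x != set0 -> supp z != set0 ->
  nDkernel R e.+1 x z ^+ 2 <= nDkernel R e.+2 x z ^+ 2.
Proof.
move=> en hx hz.
have px1 := alpha_pos hx (ltnW en); have px2 := alpha_pos hx en.
have pz1 := alpha_pos hz (ltnW en); have pz2 := alpha_pos hz en.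
have k1 := key e (supp x) (supp z).
have k2 := key e (supp z) (supp x).
rewrite (Kc_sym e.+1 (supp z)) (Kc_sym e.+2 (supp z)) in k2.
rewrite !nk_sq ?Dkernel_Kc ?ltr0n //.
rewrite ler_pdivrMr ?mulr_gt0 ?ltr0n // mulrAC ler_pdivlMr ?mulr_gt0 ?ltr0n //.
rewrite -!natrX -!natrM ler_nat.
have := leq_mul k1 k2.
move: k1 k2 px1 px2 pz1 pz2.
set g1 := Kc e.+1 _ _; set g2 := Kc e.+2 _ _.
set a1 := Kc e.+1 (supp x) (supp x); set a2 := Kc e.+2 (supp x) (supp x).
set b1 := Kc e.+1 (supp z) (supp z); set b2 := Kc e.+2 (supp z) (supp z).
move=> *; nia.
Qed.

Lemma diag_pos (R : rcfType) n e (x : bvec n) : (e < n)%N -> supp x != set0 ->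
  0 < Dkernel R e.+1 x x.
Proof. by move=> en hx; rewrite Dkernel_Kc ltr0n; apply: alpha_pos. Qed.

Lemma sumsq_ge (R : rcfType) m (K : 'M[R]_m) : (forall i, K i i = 1) ->
  m%:R <= \sum_(i < m) \sum_(j < m) K i j ^+ 2.
Proof.
move=> Kd.
have -> : (m%:R : R) = \sum_(i < m) 1 by rewrite sumr_const card_ord.
apply: ler_sum => i _.
rewrite (bigD1 i) //= Kd expr1n lerDl; apply: sumr_ge0 => j _; exact: sqr_ge0.
Qed.

Theorem mainTheorem2 (R : rcfType) (n d m : nat) (X : 'I_m -> {ffun 'I_n -> bool}) :
  (1 <= d)%N -> (d + 1 <= n)%N ->
  (forall i : 'I_m, [exists k : 'I_n, X i k]) ->
  (forall i j : 'I_m,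
      nDkernel R d (X i) (X j) ^+ 2 <= nDkernel R (d + 1)%N (X i) (X j) ^+ 2) /\
  spectral_ratio (nDmatrix R (d + 1)%N X) <= spectral_ratio (nDmatrix R d X).
Proof.
case: d => [//|e] _; rewrite addn1 => en hX.
have hs i : supp (X i) != set0 by apply: supp_ne0.
have pw i j : nDkernel R e.+1 (X i) (X j) ^+ 2 <= nDkernel R e.+2 (X i) (X j) ^+ 2.
  exact: pt_ineq.
split => //.
have d1 : forall i, nDmatrix R e.+1 X i i = 1.
  by move=> i; rewrite mxE nk_diag // diag_pos // ltnW.
have d2 : forall i, nDmatrix R e.+2 X i i = 1.
  by move=> i; rewrite mxE nk_diag // diag_pos.
rewrite /spectral_ratio.
have -> : \tr (nDmatrix R e.+2 X) = m%:R.
  by rewrite /mxtrace (eq_bigr (fun _ => 1)) ?sumr_const ?card_ord.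
have -> : \tr (nDmatrix R e.+1 X) = m%:R.
  by rewrite /mxtrace (eq_bigr (fun _ => 1)) ?sumr_const ?card_ord.
have S12 : \sum_(i < m) \sum_(j < m) nDmatrix R e.+1 X i j ^+ 2 <=
           \sum_(i < m) \sum_(j < m) nDmatrix R e.+2 X i j ^+ 2.
  by apply: ler_sum => i _; apply: ler_sum => j _; rewrite !mxE.
have s1 := sumsq_ge d1.
case: m X hX hs pw d1 d2 S12 s1 => [|m'] X hX hs pw d1 d2 S12 s1; first by rewrite !mul0r.
have p1 : 0 < \sum_(i < m'.+1) \sum_(j < m'.+1) nDmatrix R e.+1 X i j ^+ 2.
  by apply: lt_le_trans s1; rewrite ltr0n.
apply: ler_wpM2l; first exact: ler0n.
rewrite lef_pV2 ?posrE ?sqrtr_gt0 //; last exact: lt_le_trans S12.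
by rewrite ler_sqrt //; apply: le_trans S12; apply: ltW.
Qed.
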